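(* Let $\underline{P}$ be a lower prevision that is 2-coherent wherever it is defined (its domain containing the gambles below), with conjugate $\overline{P}$. Let $X$ be a gamble and $0<s<t$. Then (a) $[\underline{P}(|X|^s)]^{1/s}\le[\overline{P}(|X|^s)]^{1/s}\le[\overline{P}(|X|^t)]^{1/t}$; (b) if $X\ge 0$, then $[\underline{P}(X^s)]^{1/s}\le[\underline{P}(X^t)]^{1/t}$.
   Context: $\Pi$ is a partition of the sure event into pairwise disjoint non-impossible events; a gamble is a bounded map $X:\Pi\to\mathbb{R}$, and $|X|^s$, $X^s$ are defined pointwise. A lower prevision $\underline{P}:\mathcal{D}\to\mathbb{R}$ is 2-coherent iff for all $X_0,X_1\in\mathcal{D}$, $s_1\ge 0$, $s_0\in\mathbb{R}$, $\sup[s_1(X_1-\underline{P}(X_1))-s_0(X_0-\underline{P}(X_0))]\ge 0$; its conjugate is $\overline{P}(Y)=-\underline{P}(-Y)$. *)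

(* Defs.v *)
From HB Require Import structures.
From mathcomp Require Import all_boot all_order all_algebra.
From mathcomp Require Import all_classical all_reals all_analysis.
Set Implicit Arguments. Unset Strict Implicit. Unset Printing Implicit Defensive.
Import Order.TTheory GRing.Theory Num.Theory.
Local Open Scope classical_set_scope.
Local Open Scope ring_scope.

(* Omega plays the role of the partition Pi; a gamble is a bounded map Omega -> R. *)
Definition gamble (R : realType) (Omega : Type) (X : Omega -> R) : Prop :=
  exists M : R, forall w, `|X w| <= M.

Definition two_coherent (R : realType) (Omega : Type)
  (D : set (Omega -> R)) (P : (Omega -> R) -> R) : Prop :=
  forall X0 X1, D X0 -> D X1 -> forall s1 s0 : R, 0 <= s1 ->
    0 <= sup (range (fun w => s1 * (X1 w - P X1) - s0 * (X0 w - P X0))).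

Definition upper (R : realType) (Omega : Type) (P : (Omega -> R) -> R)
  (Y : Omega -> R) : R := - P (fun w => - Y w).

(* Main.v *)
Require Import Defs.
From HB Require Import structures.
From mathcomp Require Import all_boot all_order all_algebra.
From mathcomp Require Import all_classical all_reals all_analysis.
From mathcomp Require Import ring lra.
Import Order.TTheory GRing.Theory Num.Theory.
Local Open Scope classical_set_scope.
Local Open Scope ring_scope.

Lemma coh_pt (R : realType) (Omega : Type) (w0 : Omega)
  (D : set (Omega -> R)) (P : (Omega -> R) -> R) (hcoh : two_coherent D P)
  X0 X1 s1 s0 e : D X0 -> D X1 -> 0 <= s1 ->
  (forall w, s1 * (X1 w - P X1) - s0 * (X0 w - P X0) <= - e) -> e <= 0.
Proof.
move=> d0 d1 hs1 H.
have h0 := hcoh X0 X1 d0 d1 s1 s0 hs1.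
have : sup (range (fun w => s1 * (X1 w - P X1) - s0 * (X0 w - P X0))) <= - e.
  apply: ge_sup; first by exists (s1 * (X1 w0 - P X1) - s0 * (X0 w0 - P X0)), w0.
  by move=> _ [w _ <-]; exact: H.
move=> h1; lra.
Qed.

Lemma tang (R : realType) (c z r : R) : 0 < c -> 0 <= z -> 0 < r < 1 ->
  powR z r <= (1 - r) * powR c r + r * powR c r / c * z.
Proof.
move=> c0 z0 /andP[r0 r1].
set u := z / c.
have u0 : 0 <= u by rewrite /u divr_ge0 // ltW.
have zE : z = c * u by rewrite /u mulrC divfK // gt_eqF.
have Y := @conjugate_powR R (powR u r) 1 r^-1 (1 - r)^-1 (powR_ge0 _ _) ler01
  ltac:(by rewrite invr_gt0) ltac:(by rewrite invr_gt0 subr_gt0) ltac:(by rewrite !invrK; ring).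
rewrite -powRrM mulfV ?gt_eqF // powRr1 // powR1 mulr1 !invrK in Y.
rewrite zE (powRM _ (ltW c0) u0).
have cr0 : 0 <= powR c r by apply: powR_ge0.
have := ler_wpM2l cr0 Y.
have -> : r * powR c r / c * (c * u) = powR c r * (u * r).
  by field; rewrite gt_eqF.
rewrite mulrDr; lra.
Qed.

Lemma key (R : realType) (Omega : Type) (z : Omega -> R) (r Ls Lt : R) :
  (forall w, 0 <= z w) -> 0 < r < 1 -> 0 <= Lt -> 0 <= Ls ->
  (forall k e, 0 <= k ->
     (forall w, powR (z w) r - Ls - k * (z w - Lt) <= - e) -> e <= 0) ->
  Ls <= powR Lt r.
Proof.
move=> z0 hr Lt0 Ls0 H.
have /andP[r0 r1] := hr.
rewrite leNgt; apply/negP => hlt.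
have [Ltp|Lte] : 0 < Lt \/ Lt = 0.
  by move: Lt0; rewrite le_eqVlt => /orP[/eqP ->|->]; [right|left].
- set k := r * powR Lt r / Lt.
  have k0 : 0 <= k by rewrite /k divr_ge0 ?mulr_ge0 ?powR_ge0 ?ltW.
  have kL : k * Lt = r * powR Lt r by rewrite /k divfK // gt_eqF.
  suff : Ls - powR Lt r <= 0 by rewrite leNgt subr_gt0 hlt.
  apply: (H k _ k0) => w.
  have := @tang R Lt (z w) r Ltp (z0 w) hr; rewrite -/k mulrBr kL; lra.
- subst Lt.
  have Lsp : 0 < Ls by apply: le_lt_trans hlt; rewrite powR_ge0.
  set c := powR Ls r^-1.
  have cp : 0 < c by rewrite /c powR_gt0.
  have cr : powR c r = Ls.
    by rewrite /c -powRrM mulVf ?gt_eqF // powRr1 // ltW.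
  set k := r * powR c r / c.
  have k0 : 0 <= k by rewrite /k divr_ge0 ?mulr_ge0 ?powR_ge0 ?ltW.
  have kL : k * c = r * powR c r by rewrite /k divfK // gt_eqF.
  suff : r * Ls <= 0 by rewrite leNgt mulr_gt0.
  apply: (H k _ k0) => w.
  have := @tang R c (z w) r cp (z0 w) hr; rewrite -/k cr subr0; lra.
Qed.

Lemma fin_step (R : realType) (s t Ls Lt : R) : 0 < s -> s < t ->
  0 <= Ls -> 0 <= Lt -> Ls <= powR Lt (s / t) ->
  powR Ls s^-1 <= powR Lt t^-1.
Proof.
move=> hs hst Ls0 Lt0 h.
have t0 : 0 < t by apply: lt_trans hst.
have -> : t^-1 = s / t * s^-1 by rewrite mulrAC mulfV ?gt_eqF // mul1r.
rewrite powRrM; apply: ge0_ler_powR => //; rewrite ?invr_ge0 ?ltW // nnegrE.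
exact: powR_ge0.
Qed.

Theorem proposition1 (R : realType) (Omega : Type) (w0 : Omega)
  (D : set (Omega -> R)) (P : (Omega -> R) -> R)
  (hD : forall Y, D Y -> gamble Y) (hcoh : two_coherent D P)
  (X : Omega -> R) (hX : gamble X) (s t : R) (hs : 0 < s) (hst : s < t) :
  (D (fun w => powR `|X w| s) -> D (fun w => - powR `|X w| s) ->
   D (fun w => - powR `|X w| t) ->
   powR (P (fun w => powR `|X w| s)) s^-1
     <= powR (upper P (fun w => powR `|X w| s)) s^-1 /\
   powR (upper P (fun w => powR `|X w| s)) s^-1
     <= powR (upper P (fun w => powR `|X w| t)) t^-1) /\
  ((forall w, 0 <= X w) ->
   D (fun w => powR (X w) s) -> D (fun w => powR (X w) t) ->
   powR (P (fun w => powR (X w) s)) s^-1 <= powR (P (fun w => powR (X w) t)) t^-1).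
Proof.
have t0 : 0 < t by apply: lt_trans hst.
have hr : 0 < s / t < 1.
  by rewrite divr_gt0 //= ltr_pdivrMr // mul1r.
have pw : forall a : R, 0 <= a -> powR (powR a t) (s / t) = powR a s.
  by move=> a a0; rewrite -powRrM mulrC divfK // gt_eqF.
split.
- move=> dYs dNs dNt.
  have Ps0 : 0 <= P (fun w => powR `|X w| s).
    suff : - P (fun w => powR `|X w| s) <= 0 by lra.
    apply: (@coh_pt R Omega w0 D P hcoh _ _ (0) (1) _ dYs dYs (lexx _)) => w.
    have := powR_ge0 `|X w| s; lra.
  have PU : P (fun w => powR `|X w| s) <= upper P (fun w => powR `|X w| s).
    rewrite /upper.
    suff : P (fun w => powR `|X w| s) + P (fun w => - powR `|X w| s) <= 0 by lra.
    apply: (@coh_pt R Omega w0 D P hcoh _ _ (1) (-1) _ dNs dYs ler01) => w; lra.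
  have Ut0 : 0 <= upper P (fun w => powR `|X w| t).
    rewrite /upper.
    suff : P (fun w => - powR `|X w| t) <= 0 by lra.
    apply: (@coh_pt R Omega w0 D P hcoh _ _ (1) (0) _ dNt dNt ler01) => w.
    have := powR_ge0 `|X w| t; lra.
  split.
    have is0 : 0 <= s^-1 by rewrite invr_ge0 ltW.
    by apply: (ge0_ler_powR is0); rewrite ?nnegrE // (le_trans Ps0).
  apply: fin_step => //; first exact: le_trans Ps0 PU.
  apply: (@key R Omega (fun w => powR `|X w| t));
    [by move=> w; apply: powR_ge0 | by [] | by [] | exact: le_trans Ps0 PU | ].
  move=> k e k0 Hw.
  apply: (@coh_pt R Omega w0 D P hcoh _ _ (k) (1) _ dNs dNt k0) => w.
  have := Hw w; rewrite pw //= /upper; lra.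
- move=> X0 dYs dYt.
  have Ps0 : 0 <= P (fun w => powR (X w) s).
    suff : - P (fun w => powR (X w) s) <= 0 by lra.
    apply: (@coh_pt R Omega w0 D P hcoh _ _ (0) (1) _ dYs dYs (lexx _)) => w.
    have := powR_ge0 (X w) s; lra.
  have Pt0 : 0 <= P (fun w => powR (X w) t).
    suff : - P (fun w => powR (X w) t) <= 0 by lra.
    apply: (@coh_pt R Omega w0 D P hcoh _ _ (0) (1) _ dYt dYt (lexx _)) => w.
    have := powR_ge0 (X w) t; lra.
  apply: fin_step => //.
  apply: (@key R Omega (fun w => powR (X w) t));
    [by move=> w; apply: powR_ge0 | by [] | by [] | by [] | ].
  move=> k e k0 Hw.
  apply: (@coh_pt R Omega w0 D P hcoh _ _ (1) (k) _ dYt dYs ler01) => w.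
  have := Hw w; rewrite pw //=; lra.
Qed.
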